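(* Consider the system $\dot X=(1-Y)X$, $\dot Y=(X-U)Y$ on $\{X>0,Y>0\}$ with arbitrary input $U$, and let $V(X,Y)=\Psi(1/X)+\Psi(Y/X)$. Then along solutions $\dot V=L(X,Y)+G(X,Y)U$ with $$L(X,Y)=\frac{-(X-1)^2+Y(Y-X)}{X},\qquad G(X,Y)=\frac{X-Y}{X},$$ and for every $(X,Y)$ with $X>0$, $Y>0$, $(X,Y)\neq(1,1)$, there exists $U>0$ such that $L(X,Y)+G(X,Y)U<0$. In particular, whenever $G(X,Y)\ge 0$ and $(X,Y)\ne(1,1)$, one has $L(X,Y)<0$. Thus $V$ is a global control Lyapunov function on $\{X>0,Y>0\}$ with inputs restricted to $U>0$.
   Context: $\Psi(S)=S-1-\ln S$ for $S>0$. *)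

(* Defs.v *)
From Stdlib Require Import Reals.
From Coquelicot Require Import Coquelicot.
Open Scope R_scope.

Definition Psi (S : R) : R := S - 1 - ln S.

Definition V (X Y : R) : R := Psi (1 / X) + Psi (Y / X).

Definition Lf (X Y : R) : R := (- (X - 1) ^ 2 + Y * (Y - X)) / X.
Definition Gf (X Y : R) : R := (X - Y) / X.

(* Main.v *)
Require Import Defs.
From Stdlib Require Import Reals Lra Psatz.
From Coquelicot Require Import Coquelicot.
Open Scope R_scope.

Lemma Psi_pos (s : R) : 0 < s -> s <> 1 -> 0 < Psi s.
Proof.
  intros hs h1. unfold Psi.
  assert (hl : ln s <> 0) by (apply ln_neq_0; lra).
  pose proof (exp_ineq1 _ hl) as H. rewrite exp_ln in H by lra. lra.
Qed.

Lemma Psi_nonneg (s : R) : 0 < s -> 0 <= Psi s.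
Proof.
  intros hs. destruct (Req_dec s 1) as [->|h].
  - unfold Psi. rewrite ln_1. lra.
  - left; now apply Psi_pos.
Qed.

Lemma L_neg x y : 0 < x -> 0 < y -> (x, y) <> (1, 1) -> 0 <= Gf x y -> Lf x y < 0.
Proof.
  intros hx hy hne hG. unfold Gf, Lf in *.
  assert (hi : 0 < / x) by (apply Rinv_0_lt_compat; lra).
  assert (hxx : x * / x = 1) by (field; lra).
  assert (hxy : y <= x).
  { unfold Rdiv in hG. nra. }
  assert (hn : - (x - 1) ^ 2 + y * (y - x) < 0).
  { destruct (Req_dec x 1) as [->|h1].
    - assert (y <> 1) by (intro; subst; apply hne; reflexivity). nra.
    - assert (x - 1 <> 0) by lra.
      assert (0 < (x-1)*(x-1)) by (apply Rsqr_pos_lt; lra). nra. }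
  unfold Rdiv. nra.
Qed.

Theorem mainTheorem6 :
  (* along solutions of X' = (1-Y)X, Y' = (X-U)Y (U an arbitrary input),
     dV/dt = L + G U at every time t where X, Y > 0 *)
  (forall (X Y U : R -> R) (t : R),
      0 < X t -> 0 < Y t ->
      is_derive X t ((1 - Y t) * X t) ->
      is_derive Y t ((X t - U t) * Y t) ->
      is_derive (fun s => V (X s) (Y s)) t (Lf (X t) (Y t) + Gf (X t) (Y t) * U t))
  /\
  (forall x y : R, 0 < x -> 0 < y -> (x, y) <> (1, 1) ->
      exists u : R, 0 < u /\ Lf x y + Gf x y * u < 0)
  /\
  (forall x y : R, 0 < x -> 0 < y -> (x, y) <> (1, 1) ->
      0 <= Gf x y -> Lf x y < 0)
  /\
  (* V is positive definite on the open quadrant about the equilibrium (1,1) *)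
  (V 1 1 = 0 /\
   forall x y : R, 0 < x -> 0 < y -> (x, y) <> (1, 1) -> 0 < V x y).
Proof.
  split; [|split; [|split; [|split]]].
  - intros X Y U t hx hy dX dY. unfold V, Psi.
    assert (eX := is_derive_unique _ _ _ dX).
    assert (eY := is_derive_unique _ _ _ dY).
    auto_derive.
    all: try (repeat split; try (eexists; eassumption); try (apply Rgt_not_eq; apply Rdiv_lt_0_compat; lra); try lra).
    1,2: apply Rmult_lt_0_compat; try apply Rinv_0_lt_compat; lra.
    change (fun x => X x) with X; change (fun x => Y x) with Y.
    rewrite eX, eY. unfold Lf, Gf. field. lra.
  - intros x y hx hy hne.
    destruct (Rlt_or_le (Gf x y) 0) as [hG|hG].
    + exists ((Rabs (Lf x y) + 1) / (- Gf x y)). split.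
      * apply Rdiv_lt_0_compat; [pose proof (Rabs_pos (Lf x y))|]; lra.
      * replace (Gf x y * ((Rabs (Lf x y) + 1) / - Gf x y))
          with (- (Rabs (Lf x y) + 1)) by (field; lra).
        pose proof (Rle_abs (Lf x y)). lra.
    + pose proof (L_neg x y hx hy hne hG) as hL.
      destruct (Req_dec (Gf x y) 0) as [h0|h0].
      * exists 1. rewrite h0. lra.
      * exists (- Lf x y / (2 * Gf x y)). split.
        -- apply Rdiv_lt_0_compat; lra.
        -- replace (Gf x y * (- Lf x y / (2 * Gf x y))) with (- Lf x y / 2)
             by (field; lra). lra.
  - exact L_neg.
  - unfold V, Psi. replace (1/1) with 1 by field. rewrite ln_1. lra.
  - intros x y hx hy hne. unfold V.
    assert (h1 : 0 < 1 / x) by (apply Rdiv_lt_0_compat; lra).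
    assert (h2 : 0 < y / x) by (apply Rdiv_lt_0_compat; lra).
    destruct (Req_dec (1 / x) 1) as [e1|e1].
    + assert (x = 1).
      { assert (1 = 1 / x * x) by (field; lra). rewrite e1 in H. lra. }
      subst x. assert (y <> 1) by (intro; subst; apply hne; reflexivity).
      pose proof (Psi_nonneg _ h1).
      assert (0 < Psi (y / 1)) by (apply Psi_pos; [lra| unfold Rdiv; rewrite Rinv_1, Rmult_1_r; auto]).
      lra.
    + pose proof (Psi_pos _ h1 e1). pose proof (Psi_nonneg _ h2). lra.
Qed.
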